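(* Let $E$ and $H$ be finite directed graphs and let $\xi^{0},\xi^{1}:H\to E$ be an embedding pair, with associated self-similar groupoid action $(G_{\xi},E)$. Then, on $E^{-\infty}$, the equivalence relation $\sim_{\xi}$ is equal to the asymptotic equivalence relation $\sim_{ae}$ of $(G_{\xi},E)$. Consequently $(\sigma_{\xi},\mathcal{J}_{\xi})=(\tilde{\sigma},\mathcal{J}_{G_{\xi},E})$.
   Context: A directed graph $E=(E^0,E^1,r,s)$ has vertices $E^0$, edges $E^1$, range and source maps $r,s:E^1\to E^0$. A finite path of length $n$ is $\mu=\mu_1\cdots\mu_n$ with $s(\mu_i)=r(\mu_{i+1})$; vertices are paths of length $0$; $E^*$ is the set of finite paths, $r(\mu)=r(\mu_1)$, $s(\mu)=s(\mu_n)$, and $vE^*$ denotes paths with range $v$. $E^{-\infty}$ is the set of left-infinite paths $\mu=\cdots\mu_{-2}\mu_{-1}$ (edges with $s(\mu_i)=r(\mu_{i+1})$), with the product topology, and the shift $\sigma:E^{-\infty}\to E^{-\infty}$ is $\sigma(\cdots\mu_{-3}\mu_{-2}\mu_{-1})=\cdots\mu_{-3}\mu_{-2}$. An embedding pair consists of two injective graph homomorphisms $\xi^0,\xi^1:H\to E$ with $\xi^0|_{H^0}=\xi^1|_{H^0}$ and $\xi^0(H^1)\cap\xi^1(H^1)=\emptyset$. Put $H^0_\xi=\xi^0(H^0)$ and $H^1_\xi=\xi^0(H^1)\cup\xi^1(H^1)$. The groupoid $\tilde G_\xi=\mathbb{Z}\times E^0$ is the group bundle where $(m,v),(n,w)$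 are composable iff $v=w$, with $(m,v)(n,v)=(m+n,v)$, and domain = codomain = $v$. For $(m,v)$ and $e\in vE^1$ define: if $e\notin H^1_\xi$, $(m,v)\cdot e=e$ and $(m,v)|_e=(0,s(e))$; if $e=\xi^i(h)$ with $h\in H^1$, $i\in\{0,1\}$, write $m+i=2n+j$ with $j\in\{0,1\}$, $n\in\mathbb{Z}$, and set $(m,v)\cdot e=\xi^j(h)$, $(m,v)|_e=(n,s(e))$. This extends recursively to an action on finite paths by $g\cdot(e\nu)=(g\cdot e)(g|_e\cdot\nu)$ with $g|_{e\nu}=(g|_e)|_\nu$. $G_\xi$ is the quotient of $\tilde G_\xi$ by the elements acting trivially on $E^*$; it acts faithfully and self-similarly on $E^*$ (restrictions descend), giving the self-similar groupoid action $(G_\xi,E)$. Asymptotic equivalence: for $\mu,\nu\in E^{-\infty}$, $\mu\sim_{ae}\nu$ iff there are a finite set $F\subseteq G_\xi$ and $(g_n)_{n<0}\subseteq F$ with $d(g_n)=r(\mu_n)$ and $g_n\cdot\mu_n\cdots\mu_{-1}=\nu_n\cdots\nu_{-1}$ for all $n<0$. The limit space $\mathcal{J}_{G_\xi,E}=E^{-\infty}/\sim_{ae}$ (quotient topology) with $\tilde\sigma$ induced by $\sigma$. The relation $\sim_\xi$: $\mu\sim_\xi\nu$ iff $\mu=\nu$, or there are $n<0$, $i\in\{0,1\}$ and $(y_k)_{k\le n}\subseteq H^1$ with $\mu_k=\xi^i(y_k)$ and $\nu_k=\xi^{1-i}(y_k)$ for all $k\le n$, and one of: (1) $n=-1$;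 (2) $n<-1$, $\mu_j=\nu_j$ for all $j>n+1$, and there is $y_{n+1}\in H^1$ with $\mu_{n+1}=\xi^{1-i}(y_{n+1})$, $\nu_{n+1}=\xi^i(y_{n+1})$; (3) $n<-1$, $\mu_j=\nu_j$ for all $j\ge n+1$, and $\mu_{n+1}=\nu_{n+1}\notin H^1_\xi$. $\mathcal{J}_\xi=E^{-\infty}/\sim_\xi$ with $\sigma_\xi$ induced by $\sigma$. *)

(* Defs.v *)
From mathcomp Require Import all_boot all_order all_algebra.
Set Implicit Arguments. Unset Strict Implicit. Unset Printing Implicit Defensive.
Import GRing.Theory Num.Theory.

(* A finite path mu_1 ... mu_n is a sequence [:: mu_1; ...; mu_n] with
   sE mu_i = rE mu_(i+1); its range is rE mu_1.
   A left-infinite path ... mu_(-2) mu_(-1) is a function mu : nat -> E with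
   mu k = mu_(-(k+1)); the path condition s(mu_(-(k+2))) = r(mu_(-(k+1))) is
   sE (mu k.+1) = rE (mu k). *)

Section SelfSimilar.
Variables (V E HV HE : finType).
Variables (rE sE : E -> V) (rH sH : HE -> HV).
Variables (x0v x1v : HV -> V) (x0e x1e : HE -> E).

Definition graph_emb (xv : HV -> V) (xe : HE -> E) : Prop :=
  [/\ injective xv, injective xe,
      forall h, rE (xe h) = xv (rH h) & forall h, sE (xe h) = xv (sH h)].

Definition embedding_pair : Prop :=
  [/\ graph_emb x0v x0e, graph_emb x1v x1e,
      (forall v, x0v v = x1v v) & forall h h', x0e h <> x1e h'].

Definition xie (i : bool) : HE -> E := if i then x1e else x0e.

Definition inH1 (e : E) : bool := [exists h, (x0e h == e) || (x1e h == e)].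

(* For g = (m, r e) in tilde G_xi and the edge e: returns (g.e, integer part of g|_e);
   the vertex part of g|_e is always s(e). *)
Definition act_edge_from (m : int) (i : bool) (h : HE) : E * int :=
  let k := (m + (i : int))%R in
  (xie ((k %% 2)%Z != 0%R) h, (k %/ 2)%Z).

Definition act_edge (m : int) (e : E) : E * int :=
  match [pick h | x0e h == e] with
  | Some h => act_edge_from m false h
  | None =>
    match [pick h | x1e h == e] with
    | Some h => act_edge_from m true h
    | None => (e, 0%R)
    end
  end.

(* action of (m, r(p)) on a finite path p, via g.(e nu) = (g.e)(g|_e . nu) *)
Fixpoint act (m : int) (p : seq E) : seq E :=
  match p with
  | [::] => [::]
  | e :: p' => let: (e', n) := act_edge m e in e' :: act n p'
  end.

Definition fpath (v : V) (p : seq E) : bool :=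
  match p with
  | [::] => true
  | e :: p' => (rE e == v) && path (fun a b => sE a == rE b) e p'
  end.

(* The groupoid G_xi is the quotient of tilde G_xi = Z x E^0 by the elements
   acting trivially on E^*; two elements of tilde G_xi have the same image in
   G_xi iff they have the same unit and act identically on paths. *)
Definition Gxi_eq (g g' : int * V) : Prop :=
  g.2 = g'.2 /\ forall p, fpath g.2 p -> act g.1 p = act g'.1 p.

Definition linf (mu : nat -> E) : Prop := forall k, sE (mu k.+1) = rE (mu k).

(* the finite tail mu_(-(k+1)) ... mu_(-1) *)
Definition tail (mu : nat -> E) (k : nat) : seq E := rev (mkseq mu k.+1).

(* asymptotic equivalence: a finite set F of G_xi (given by a finite list of
   representatives in tilde G_xi) and g_n (n = -(k+1)) with values in F. *)
Definition ae_equiv (mu nu : nat -> E) : Prop :=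
  exists (F : seq (int * V)) (g : nat -> int * V),
    forall k,
      [/\ exists2 h, h \in F & Gxi_eq h (g k),
          (g k).2 = rE (mu k) &
          act (g k).1 (tail mu k) = tail nu k].

(* the relation ~_xi ; n = -(k+1), index j <= n  <-> j' >= k *)
Definition xi_rel (mu nu : nat -> E) : Prop :=
  mu = nu \/
  exists (k : nat) (i : bool) (y : nat -> HE),
    (forall j, k <= j -> mu j = xie i (y j) /\ nu j = xie (~~ i) (y j)) /\
    [\/ k = 0,
        0 < k /\ (forall j, j < k.-1 -> mu j = nu j) /\
          (exists y1, mu k.-1 = xie (~~ i) y1 /\ nu k.-1 = xie i y1)
      | 0 < k /\ (forall j, j <= k.-1 -> mu j = nu j) /\ ~~ inH1 (mu k.-1)].

End SelfSimilar.

(* Main.v *)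
Require Import Defs.
From mathcomp Require Import all_boot all_order all_algebra zify.
From Stdlib Require Classical_Prop FunctionalExtensionality.
Set Implicit Arguments. Unset Strict Implicit. Unset Printing Implicit Defensive.
Import GRing.Theory Num.Theory.

Section S.
Variables (V E HV HE : finType).
Variables (rE sE : E -> V) (rH sH : HE -> HV).
Variables (x0v x1v : HV -> V) (x0e x1e : HE -> E).
Hypothesis emb : embedding_pair rE sE rH sH x0v x1v x0e x1e.

Let inj0 : injective x0e. Proof. by case: emb => [[? ? _ _] _ _ _]. Qed.
Let inj1 : injective x1e. Proof. by case: emb => [_ [? ? _ _] _ _]. Qed.
Let disj h h' : x0e h <> x1e h'. Proof. by case: emb. Qed.

Local Notation xie := (xie x0e x1e).
Local Notation act_edge := (act_edge x0e x1e).
Local Notation inH1 := (inH1 x0e x1e).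

Lemma xie_inj b h b' h' : xie b h = xie b' h' -> b = b' /\ h = h'.
Proof.
case: b; case: b' => /= E1.
- by split => //; apply: inj1.
- by move: (disj (esym E1)).
- by move: (disj E1).
- by split => //; apply: inj0.
Qed.

Lemma ae_xie m b h : act_edge m (xie b h) = act_edge_from x0e x1e m b h.
Proof.
rewrite /Defs.act_edge; case: b => /=.
- case: pickP => [h' /eqP H|_]; first by move: (disj H).
  case: pickP => [h' /eqP /inj1 -> //|/(_ h)]; by rewrite eqxx.
- case: pickP => [h' /eqP /inj0 -> //|/(_ h)]; by rewrite eqxx.
Qed.

Lemma ae_notH m e : ~~ inH1 e -> act_edge m e = (e, 0%R).
Proof.
move=> /existsPn He; rewrite /Defs.act_edge.
case: pickP => [h' H|_]; first by move: (He h'); rewrite H.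
case: pickP => [h' H|_] //; by move: (He h'); rewrite H orbT.
Qed.

Lemma edge_cases e : ~~ inH1 e \/ exists b h, e = xie b h.
Proof.
case: (boolP (inH1 e)) => [/existsP [h /orP [] /eqP <-]|]; last by left.
- by right; exists false, h.
- by right; exists true, h.
Qed.

Lemma aef0 b h : act_edge_from x0e x1e 0 b h = (xie b h, 0%R).
Proof. by case: b. Qed.

Definition sgn (i : bool) : int := if i then 1%R else (-1)%R.

Lemma aef_cont i h : act_edge_from x0e x1e (sgn i) i h = (xie (~~ i) h, sgn i).
Proof. by case: i. Qed.
Lemma aef_stop i h : act_edge_from x0e x1e (sgn i) (~~ i) h = (xie i h, 0%R).
Proof. by case: i. Qed.

Lemma ae0 e : act_edge 0 e = (e, 0%R).
Proof.
case: (edge_cases e) => [/ae_notH -> //|[b [h ->]]].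
by rewrite ae_xie aef0.
Qed.

Lemma ae_bound m e : (absz (act_edge m e).2 <= maxn 1 (absz m).-1)%N.
Proof.
case: (edge_cases e) => [/ae_notH -> /=|[b [h ->]]]; first by lia.
rewrite ae_xie /act_edge_from /=.
case: b => /=; lia.
Qed.
Local Notation act := (act x0e x1e).
Local Notation tail := Defs.tail.

Lemma tailS (mu : nat -> E) K : tail mu K.+1 = mu K.+1 :: tail mu K.
Proof. by rewrite /Defs.tail mkseqS rev_rcons. Qed.

Lemma tail_cons (mu : nat -> E) K :
  tail mu K = mu K :: (if K is K'.+1 then tail mu K' else [::]).
Proof. by case: K => [|K] //; rewrite tailS. Qed.

Lemma act_cons m e p : act m (e :: p) = (act_edge m e).1 :: act (act_edge m e).2 p.
Proof. by rewrite /=; case: (act_edge m e). Qed.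

Lemma act0 p : act 0 p = p.
Proof. elim: p => [//|e p IH]; by rewrite act_cons ae0 /= IH. Qed.

Lemma tail_eq (mu nu : nat -> E) K : (forall j, (j <= K)%N -> mu j = nu j) ->
  tail mu K = tail nu K.
Proof.
elim: K => [H|K IH H]; first by rewrite /Defs.tail /mkseq /= H.
rewrite !tailS H // IH // => j Hj; apply: H; lia.
Qed.

Lemma sgn_cases (r : int) : (absz r <= 1)%N -> r != 0%R -> r = sgn (r == 1%R).
Proof.
move=> H1 H2; have: r = 1%R \/ r = (-1)%R by lia.
by case=> ->.
Qed.

Lemma nb (b c : bool) : b != c -> ~~ b = c.
Proof. by case: b; case: c. Qed.

Lemma flip_sgn i b h : (act_edge (sgn i) (xie b h)).1 = xie (~~ b) h.
Proof. by rewrite ae_xie; case: i; case: b. Qed.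

Lemma rest_sgn i b h : (act_edge (sgn i) (xie b h)).2 = if b == i then sgn i else 0%R.
Proof. by rewrite ae_xie; case: i; case: b. Qed.

Lemma edge_sgn i e : (act_edge (sgn i) e).2 != 0%R ->
  exists h, e = xie i h /\ act_edge (sgn i) e = (xie (~~ i) h, sgn i).
Proof.
case: (edge_cases e) => [/ae_notH -> //|[b [h ->]]].
rewrite rest_sgn; case: (b =P i) => [-> _|//]; exists h; split => //.
by rewrite ae_xie; case: i.
Qed.

Fixpoint rs (mu : nat -> E) (K : nat) (m : int) (t : nat) : int :=
  match t with 0 => m | t'.+1 => (act_edge (rs mu K m t') (mu (K - t')%N)).2 end.

Lemma rsF1 mu nu K m : act m (tail mu K) = tail nu K ->
  forall t, (t <= K)%N -> act (rs mu K m t) (tail mu (K - t)) = tail nu (K - t).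
Proof.
move=> H; elim=> [_|t IH Ht]; first by rewrite subn0.
have E1 : (K - t = (K - t.+1).+1)%N by lia.
move: (IH (ltnW Ht)); rewrite /= E1 !tailS act_cons => -[_ ->] //.
Qed.

Lemma rsF2 mu nu K m : act m (tail mu K) = tail nu K ->
  forall t, (t <= K)%N -> nu (K - t)%N = (act_edge (rs mu K m t) (mu (K - t)%N)).1.
Proof.
move=> H t Ht; move: (rsF1 H Ht).
by rewrite (tail_cons mu) (tail_cons nu) act_cons => -[].
Qed.

Lemma rs_bound mu K m B : (absz m <= B)%N ->
  forall t, (absz (rs mu K m t) <= maxn 1 (B - t))%N.
Proof.
move=> H; elim=> [|t IH] /=; first by lia.
have := ae_bound (rs mu K m t) (mu (K - t)%N); lia.
Qed.

Lemma rs_zero mu K m t : rs mu K m t = 0%R -> forall n, rs mu K m (t + n) = 0%R.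
Proof. move=> H; elim=> [|n IH]; first by rewrite addn0. by rewrite addnS /= IH ae0. Qed.

Lemma core (mu nu : nat -> E) d J B :
  (forall K, exists m, (absz m <= B)%N /\ act m (tail mu K) = tail nu K) ->
  mu d != nu d -> (forall j, (j < d)%N -> mu j = nu j) -> (d <= J)%N ->
  exists i, (forall j, (d < j <= J)%N -> exists h, mu j = xie i h /\ nu j = xie (~~ i) h) /\
   exists h, (mu d = xie i h /\ nu d = xie (~~ i) h /\ ((0 < d)%N -> ~~ inH1 (mu d.-1)))
          \/ (mu d = xie (~~ i) h /\ nu d = xie i h).
Proof.
move=> Hall Hd Hmin HdJ.
set K := (J + B)%N.
have HK : K = (J + B)%N by [].
have [m [Hm Hact]] := Hall K.
pose rho j := rs mu K m (K - j).
have Hnu : forall j, (j <= K)%N -> nu j = (act_edge (rho j) (mu j)).1.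
  move=> j Hj; have := rsF2 Hact (leq_subr j K); by rewrite subKn.
have Hrho : forall j, (0 < j <= K)%N -> rho j.-1 = (act_edge (rho j) (mu j)).2.
  move=> j Hj; rewrite /rho; have -> : (K - j.-1 = (K - j).+1)%N by lia.
  by rewrite /= subKn //; lia.
have Hb : forall j, (j <= J)%N -> (absz (rho j) <= 1)%N.
  move=> j Hj; rewrite /rho; have := rs_bound mu K Hm (K - j); lia.
have Hz : forall j j', (j' <= j <= K)%N -> rho j = 0%R -> rho j' = 0%R.
  move=> j j' Hj H; rewrite /rho; have -> : (K - j' = (K - j) + (j - j'))%N by lia.
  exact: rs_zero.
have Hdnz : rho d != 0%R.
  apply/eqP => H; move: Hd; rewrite Hnu; last by lia.
  by rewrite H ae0 eqxx.
have Hnz : forall j, (d <= j <= J)%N -> rho j != 0%R.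
  move=> j Hj; apply/eqP => H; move/eqP: Hdnz; apply; apply: (Hz j) => //; lia.
set i := (rho J == 1%R).
have Hconst : forall n, (n <= J - d)%N -> rho (J - n)%N = sgn i.
  elim=> [_|n IH Hn]; first by rewrite subn0; apply: sgn_cases; [apply: Hb|apply: Hnz; lia].
  have E1 : ((J - n.+1) = (J - n).-1)%N by lia.
  rewrite E1 Hrho; last by lia.
  rewrite IH; last by lia.
  have Hne : (act_edge (sgn i) (mu (J - n)%N)).2 != 0%R.
    by rewrite -IH ?E1 -?Hrho; [rewrite -E1; apply: Hnz|lia|lia]; lia.
  by have [h [_ ->]] := edge_sgn Hne.
have Hsg : forall j, (d <= j <= J)%N -> rho j = sgn i.
  move=> j Hj; have -> : j = (J - (J - j))%N by lia. apply: Hconst; lia.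
exists i; split.
  move=> j Hj.
  have Hne : (act_edge (sgn i) (mu j)).2 != 0%R.
    have Hj1 : (d <= j <= J)%N by lia.
    rewrite -(Hsg j Hj1) -Hrho; last by lia.
    apply: Hnz; lia.
  have [h [E1 E2]] := edge_sgn Hne.
  exists h; split => //; rewrite Hnu; last by lia.
  have Hj1 : (d <= j <= J)%N by lia.
  by rewrite (Hsg j Hj1) E2.
have HdJ' : (d <= d <= J)%N by rewrite leqnn.
have Hnud : nu d = (act_edge (sgn i) (mu d)).1 by rewrite -(Hsg d HdJ') Hnu //; lia.
case: (edge_cases (mu d)) => [/(ae_notH (sgn i)) Hn|[b [h Eb]]].
  by move: Hd; rewrite Hnud Hn eqxx.
exists h; rewrite Hnud Eb flip_sgn.
case: (boolP (b == i)) => [/eqP Ebi|Hbi]; last first.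
  right; have Eb2 : ~~ b = i by apply: nb.
  by rewrite -Eb2 negbK.
left; rewrite Ebi; split => //; split => // Hd0.
have Hr1 : rho d.-1 = sgn i.
  by rewrite Hrho; [rewrite (Hsg d HdJ') Eb rest_sgn Ebi eqxx|lia].
case: (edge_cases (mu d.-1)) => [//|[b' [h' Eb']]].
have : nu d.-1 = xie (~~ b') h' by rewrite Hnu ?Hr1 ?Eb' ?flip_sgn //; lia.
rewrite -Hmin; last by lia.
rewrite Eb' => /xie_inj [Hbb _]; move: Hbb; by case: (b').
Qed.

Lemma fpath_tail (mu : nat -> E) (K : nat) : linf rE sE mu -> Defs.fpath rE sE (rE (mu K)) (tail mu K).
Proof.
move=> Hl; rewrite /Defs.fpath tail_cons eqxx /=.
elim: K => [//|K IH] /=; by rewrite tail_cons /= Hl eqxx IH.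
Qed.

Lemma seq_bound (F : seq (int * V)) : exists B, forall h, h \in F -> (absz h.1 <= B)%N.
Proof.
elim: F => [|a F [B HB]]; first by exists 0%N.
exists (maxn (absz a.1) B) => h; rewrite inE => /orP [/eqP ->|/HB H]; [exact: leq_maxl|exact: (leq_trans H (leq_maxr _ _))].
Qed.

Lemma ae_of (mu nu : nat -> E) (f : nat -> int) :
  (forall K, f K \in [:: (-1)%R; 0%R; 1%R]) ->
  (forall K, act (f K) (tail mu K) = tail nu K) -> ae_equiv rE sE x0e x1e mu nu.
Proof.
move=> Hf Ha.
exists [seq (m, v) | m <- [:: (-1)%R; 0%R; 1%R], v <- enum V].
exists (fun K => (f K, rE (mu K))) => K; split; [|by []|exact: Ha].
exists (f K, rE (mu K)); last by split.
by apply: allpairs_f; rewrite ?mem_enum.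
Qed.

Lemma sgn_in i : sgn i \in [:: (-1)%R; 0%R; 1%R].
Proof. by case: i. Qed.

Lemma run (mu nu : nat -> E) a i (y : nat -> HE) :
  act (sgn i) (tail mu a) = tail nu a ->
  (forall j, (a < j)%N -> mu j = xie i (y j) /\ nu j = xie (~~ i) (y j)) ->
  forall n, act (sgn i) (tail mu (a + n)) = tail nu (a + n).
Proof.
move=> H0 Hj; elim=> [|n IH]; first by rewrite addn0.
rewrite addnS !tailS act_cons.
have [-> ->] := Hj (a + n).+1 ltac:(lia).
by rewrite ae_xie aef_cont /= IH.
Qed.

Lemma xi_to_ae (mu nu : nat -> E) :
  xi_rel x0e x1e mu nu -> ae_equiv rE sE x0e x1e mu nu.
Proof.
case=> [<-|[k [i [y [Hy Hc]]]]].
  by apply: (@ae_of mu mu (fun _ => 0%R)) => // K; rewrite act0.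
have Hrun : forall a, (k <= a.+1)%N -> act (sgn i) (tail mu a) = tail nu a ->
    forall K, (a <= K)%N -> act (sgn i) (tail mu K) = tail nu K.
  move=> a Hka H0 K HK; have -> : K = (a + (K - a))%N by lia.
  apply: (run H0) => j Hj; apply: Hy; lia.
case: Hc => [Hk0|[Hk [Heq [y1 [E1 E2]]]]|[Hk [Heq Hn]]].
- apply: (@ae_of mu nu (fun _ => sgn i)) => [K|]; first exact: sgn_in.
  move=> K; apply: (Hrun 0%N); [by rewrite Hk0| |by []].
  have [E1 E2] := Hy 0%N ltac:(lia).
  by rewrite (tail_cons mu 0) (tail_cons nu 0) act_cons E1 ae_xie aef_cont E2.
- apply: (@ae_of mu nu (fun K => if (K < k.-1)%N then 0%R else sgn i)) => [K|K].
    by case: ifP => // _; exact: sgn_in.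
  case: ifP => HK.
    rewrite act0; apply: tail_eq => j Hj; apply: Heq; lia.
  apply: (Hrun k.-1); [lia| |lia].
  rewrite (tail_cons mu) (tail_cons nu) act_cons E1 ae_xie aef_stop /= E2 act0.
  congr cons; case: (k.-1) Heq => [//|k'] Heq'; apply: tail_eq => j Hj; apply: Heq'; lia.
- apply: (@ae_of mu nu (fun K => if (K < k.-1)%N then 0%R else sgn i)) => [K|K].
    by case: ifP => // _; exact: sgn_in.
  case: ifP => HK.
    rewrite act0; apply: tail_eq => j Hj; apply: Heq; lia.
  apply: (Hrun k.-1); [lia| |lia].
  rewrite (tail_cons mu) (tail_cons nu) act_cons (ae_notH _ Hn) /= act0 Heq //.
  congr cons; case: (k.-1) Heq => [//|k'] Heq'; apply: tail_eq => j Hj; apply: Heq'; lia.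
Qed.

Lemma choose_y (mu nu : nat -> E) i (P : nat -> bool) (h0 : HE) :
  (forall j, P j -> exists h, mu j = xie i h /\ nu j = xie (~~ i) h) ->
  exists y : nat -> HE, forall j, P j -> mu j = xie i (y j) /\ nu j = xie (~~ i) (y j).
Proof.
move=> H; exists (fun j => odflt h0 [pick h | mu j == xie i h]) => j Pj.
have [h [E1 E2]] := H j Pj.
case: pickP => [h' /eqP E3 /=|/(_ h)]; last by rewrite E1 eqxx.
by move: E3; rewrite E1 => /xie_inj [_ <-].
Qed.

Lemma ae_to_xi (mu nu : nat -> E) : linf rE sE mu ->
  ae_equiv rE sE x0e x1e mu nu -> xi_rel x0e x1e mu nu.
Proof.
move=> Hl [F [g Hg]].
have [B HB] := seq_bound F.
have Hall : forall K, exists m, (absz m <= B)%N /\ act m (tail mu K) = tail nu K.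
  move=> K; have [[h hF [H2 Hh]] Hv Ha] := Hg K.
  exists h.1; split; first exact: HB.
  rewrite Hh ?Ha // H2 Hv; exact: fpath_tail.
case: (Classical_Prop.classic (exists j, mu j != nu j)) => [Hex|Hno]; last first.
  left; apply: FunctionalExtensionality.functional_extensionality => j.
  by apply/eqP; apply/negP => /negP Hj; apply: Hno; exists j.
right.
have Hex' : exists j, mu j != nu j := Hex.
case: (ex_minnP Hex') => d Hd Hmind.
have Hmin : forall j, (j < d)%N -> mu j = nu j.
  move=> j Hj; apply/eqP; apply/negP => /negP Hj'; have := Hmind j Hj'; lia.
have [i0 [Hp0 [h0 Hd0]]] := core Hall Hd Hmin (leqnSn d).
have Hpat : forall j, (d < j)%N -> exists h, mu j = xie i0 h /\ nu j = xie (~~ i0) h.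
  move=> j Hj; have [ij [Hpj _]] := core Hall Hd Hmin (ltnW Hj).
  have [h1 [E1 _]] := Hp0 d.+1 ltac:(lia).
  have [h2 [E2 _]] := Hpj d.+1 ltac:(lia).
  have [h3 [E3 E4]] := Hpj j ltac:(lia).
  have [Hi _] : ij = i0 /\ h2 = h1 by apply: xie_inj; rewrite -E1 -E2.
  by exists h3; rewrite -Hi.
case: Hd0 => [[E1 [E2 Hn]]|[E1 E2]].
- have Hpat' : forall j, (d <= j)%N -> exists h, mu j = xie i0 h /\ nu j = xie (~~ i0) h.
    move=> j Hj; case: (eqVneq d j) => [<-|Hne]; first by exists h0.
    apply: Hpat; lia.
  have [y Hy] := @choose_y mu nu i0 (fun j => d <= j)%N h0 Hpat'.
  exists d, i0, y; split; first exact: Hy.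
  case: (posnP d) => [Hd0'|Hdpos]; first by apply: Or31.
  apply: Or33; split => //; split; last exact: Hn.
  move=> j Hj; apply: Hmin; lia.
- have [y Hy] := @choose_y mu nu i0 (fun j => d < j)%N h0 Hpat.
  exists d.+1, i0, y; split; first exact: Hy.
  apply: Or32; split => //; split; first by move=> j Hj; apply: Hmin.
  by exists h0.
Qed.
End S.

Theorem theorem4p1 (V E HV HE : finType) (rE sE : E -> V) (rH sH : HE -> HV)
  (x0v x1v : HV -> V) (x0e x1e : HE -> E) :
  embedding_pair rE sE rH sH x0v x1v x0e x1e ->
  forall mu nu : nat -> E, linf rE sE mu -> linf rE sE nu ->
    (xi_rel x0e x1e mu nu <-> ae_equiv rE sE x0e x1e mu nu).
Proof.
move=> emb mu nu Hmu Hnu; split; [exact: (xi_to_ae emb)|exact: (ae_to_xi emb Hmu)].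
Qed.
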